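(* Even for update sequences of width $3$: any deterministic strict dynamic embedding into HSTs incurs distortion $\Omega(2^n)$, and any probabilistic strict dynamic embedding into HSTs incurs distortion $\Omega(n)$, where $n$ is the number of points of the sequence. Furthermore, any deterministic online monotone embedding into HSTs incurs distortion $\Omega(n)$ on update sequences of width $3$.
   Context: For $\mu \ge 1$, a $\mu$-HST is a metric space whose points are the leaves of a rooted tree $T$; every node $v$ has weight $\varphi(v)\ge 0$, $\varphi(v)=0$ iff $v$ is a leaf, $\varphi(v)\le\varphi(u)/\mu$ when $v$ is a child of $u$; the distance of leaves $u,v$ is $\varphi(\mathrm{lca}(u,v))$. ''HSTs'' denotes the family of such metrics. An update sequence on a metric $(X,d_X)$ is a sequence of pairs $(v_t,o_t)\in X\times\{+,-\}$ ($v_t$ arrives if $o_t=+$, leaves if $o_t=-$) with alive sets $L_0=\varnothing$, $L_t=L_{t-1}\cup\{v_t\}$ or $L_{t-1}\setminus\{v_t\}$ accordingly; its width is $\max_t|L_t|$. A deterministic online monotone embedding into HSTs receives the sequence one element at a time and after $\sigma_t$ (depending only on $\sigma_1,\dots,\sigma_t$) outputs a metric $d_t$ on $L_t$ that is an HST, satisfies $d_t(u,v)\ge d_X(u,v)$ for $u,v\in L_t$, and $d_t(u,v)\le d_{t-1}(u,v)$ for $u,v\in L_{t-1}\cap L_t$. It is strict if moreover $d_t(u,v)=d_{t-1}(u,v)$ for all $u,v\in L_{t-1}\cap L_t$ (distances are fixed upon arrival). A probabilistic embedding is a distribution over deterministic ones (sequence chosen independently of the randomness). Distortion $\lambda$ means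 $d_t(u,v)\le\lambda d_X(u,v)$ (deterministic) resp. $\mathbb E[d_t(u,v)]\le\lambda d_X(u,v)$ (probabilistic) for all $t$ and $u,v\in L_t$. *)

(* Defs.v *)
From HB Require Import structures.
From mathcomp Require Import all_boot all_order all_algebra.
From mathcomp Require Import all_classical all_reals all_analysis.
Set Implicit Arguments. Unset Strict Implicit. Unset Printing Implicit Defensive.
Import Order.TTheory GRing.Theory Num.Theory.
Local Open Scope ring_scope.

Section Defs.
Variables (R : realType) (X : choiceType).

Definition is_metric (d : X -> X -> R) : Prop :=
  (forall x y, 0 <= d x y) /\ (forall x y, d x y = 0 <-> x = y) /\
  (forall x y, d x y = d y x) /\ (forall x y z, d x z <= d x y + d y z).

(** Update sequences: (v, true) = v arrives (+), (v, false) = v leaves (-). *)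
Definition update_seq := seq (X * bool).

Definition alive (s : update_seq) (x : X) : bool :=
  foldl (fun b p => if p.1 == x then p.2 else b) false s.

Definition alive_set (s : update_seq) : seq X :=
  [seq x <- undup (map fst s) | alive s x].

Definition width (s : update_seq) : nat :=
  \max_(t < (size s).+1) size (alive_set (take t s)).

Definition npoints (s : update_seq) : nat := size (undup (map fst s)).

(** mu-HST on the finite set S: a rooted tree (node type N, parent map par with
    par root = root, every node reaching the root), weights phi, and a bijection
    leaf between S and the leaves of the tree, such that distances are the
    weights of lowest common ancestors. *)
Definition is_muHST (mu : R) (S : seq X) (dd : X -> X -> R) : Prop :=
  exists (N : finType) (root : N) (par : N -> N) (phi : N -> R) (leaf : X -> N),
    let anc a v := exists k, iter k par v = a in
    let is_leaf v := forall w, w != root -> par w != v in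
    let is_lca u v w := [/\ anc w u, anc w v & forall a, anc a u -> anc a v -> anc a w] in
    [/\ par root = root,
        (forall v, exists k, iter k par v = root),
        (forall v, 0 <= phi v),
        (forall v, phi v = 0 <-> is_leaf v) &
        (forall v, v != root -> phi v <= phi (par v) / mu)] /\
    [/\ {in S &, injective leaf},
        (forall x, x \in S -> is_leaf (leaf x)),
        (forall v, is_leaf v -> exists2 x, x \in S & leaf x = v) &
        (forall x y, x \in S -> y \in S -> forall w,
            is_lca (leaf x) (leaf y) w -> dd x y = phi w)].

(** The metric dd restricted to S belongs to the family "HSTs"
    (the empty metric space is counted as an HST). *)
Definition is_HST (S : seq X) (dd : X -> X -> R) : Prop :=
  S = [::] \/ exists mu : R, 1 <= mu /\ is_muHST mu S dd.

(** A deterministic online algorithm: the output d_t is a function of the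
    prefix sigma_1..sigma_t (only its values on L_t matter). *)
Definition online_alg := update_seq -> X -> X -> R.

Definition monotone_embedding (dX : X -> X -> R) (A : online_alg) : Prop :=
  forall (q : update_seq) (e : X * bool),
    let p := rcons q e in
    [/\ is_HST (alive_set p) (A p),
        (forall u v, alive p u -> alive p v -> dX u v <= A p u v) &
        (forall u v, alive q u -> alive q v -> alive p u -> alive p v ->
           A p u v <= A q u v)].

Definition strict_embedding (dX : X -> X -> R) (A : online_alg) : Prop :=
  monotone_embedding dX A /\
  forall (q : update_seq) (e : X * bool),
    let p := rcons q e in
    forall u v, alive q u -> alive q v -> alive p u -> alive p v ->
      A p u v = A q u v.

Definition distortion_le (dX : X -> X -> R) (A : online_alg) (s : update_seq)
    (lam : R) : Prop :=
  forall t, (1 <= t <= size s)%N -> forall u v,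
    alive (take t s) u -> alive (take t s) v ->
    A (take t s) u v <= lam * dX u v.

Definition prob_distortion_le (dX : X -> X -> R) {d : measure_display}
    {Omega : measurableType d} (P : probability Omega R)
    (A : Omega -> online_alg) (s : update_seq) (lam : R) : Prop :=
  forall t, (1 <= t <= size s)%N -> forall u v,
    alive (take t s) u -> alive (take t s) v ->
    (\int[P]_w (A w (take t s) u v)%:E <= (lam * dX u v)%:E)%E.

End Defs.

(* Main.v *)
Require Import Defs.
From HB Require Import structures.
From mathcomp Require Import all_boot all_order all_algebra.
From mathcomp Require Import all_classical all_reals all_analysis.
From mathcomp Require Import ring lra zify.
From mathcomp Require Import measurable_realfun.
Import Order.TTheory GRing.Theory Num.Theory.
Local Open Scope ring_scope.
Set Implicit Arguments. Unset Strict Implicit.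

Section Gen.
Variables (R : realType) (X : choiceType).

Lemma alive_rcons (s : update_seq X) v o x :
  alive (rcons s (v, o)) x = if v == x then o else alive s x.
Proof. by rewrite /alive foldl_rcons. Qed.

Lemma alive_mem (s : update_seq X) x : alive s x -> x \in map fst s.
Proof.
elim/last_ind: s => [|s [v o] IH] //; rewrite alive_rcons map_rcons mem_rcons in_cons.
case: eqP => [->|_]; first by rewrite eqxx.
by move/IH => ->; rewrite orbT.
Qed.

Lemma mem_alive_set (s : update_seq X) x : (x \in alive_set s) = alive s x.
Proof.
rewrite /alive_set mem_filter mem_undup.
by case H: (alive s x) => //=; rewrite alive_mem.
Qed.

Lemma size_alive_set (s : update_seq X) (L : seq X) :
  uniq L -> (forall x, alive s x = (x \in L)) -> size (alive_set s) = size L.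
Proof.
move=> uL H; apply: perm_size; apply: uniq_perm => //.
  by rewrite /alive_set filter_uniq // undup_uniq.
by move=> x; rewrite mem_alive_set H.
Qed.

Lemma width_rcons (s : update_seq X) e :
  width (rcons s e) = maxn (width s) (size (alive_set (rcons s e))).
Proof.
rewrite /width size_rcons big_ord_recr /=; congr maxn.
  apply: eq_bigr => i _; rewrite -cats1 takel_cat //.
  by have := ltn_ord i; rewrite ltnS.
by rewrite take_oversize // size_rcons.
Qed.

Lemma width_nil : width ([::] : update_seq X) = 0%N.
Proof. by rewrite /width big_ord_recr big_ord0. Qed.

Lemma npoints_rcons (s : update_seq X) v o :
  npoints (rcons s (v, o)) = if v \in map fst s then npoints s else (npoints s).+1.
Proof.
rewrite /npoints map_rcons.
have -> : size (undup (rcons (map fst s) v)) = size (undup (v :: map fst s)).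
  apply: perm_size; apply: uniq_perm; rewrite ?undup_uniq // => x.
  by rewrite !mem_undup mem_rcons.
by rewrite /=; case: ifP.
Qed.

End Gen.
Section Tree.
Variables (R : realType) (N : finType) (root : N) (par : N -> N) (phi : N -> R) (mu : R).
Let anc a v := exists k, iter k par v = a.
Let is_lca u v w := [/\ anc w u, anc w v & forall a, anc a u -> anc a v -> anc a w].
Hypothesis hroot : forall v, exists k, iter k par v = root.
Hypothesis hpr : par root = root.
Hypothesis hphi0 : forall v, 0 <= phi v.
Hypothesis hmu : 1 <= mu.
Hypothesis hphi : forall v, v != root -> phi v <= phi (par v) / mu.

Lemma iter_root k : iter k par root = root.
Proof. by elim: k => //= k ->. Qed.

Lemma anc_trans a b c : anc a b -> anc b c -> anc a c.
Proof. by move=> [i <-] [j <-]; exists (i + j)%N; rewrite iterD. Qed.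

Lemma phi_par v : phi v <= phi (par v).
Proof.
have [-> | hv] := eqVneq v root; first by rewrite hpr.
apply: (le_trans (hphi hv)).
have h0 := hphi0 (par v).
rewrite ler_pdivrMr ?(lt_le_trans ltr01 hmu) //.
by rewrite -{1}(mulr1 (phi (par v))) ler_wpM2l.
Qed.

Lemma phi_anc a v : anc a v -> phi v <= phi a.
Proof.
move=> [k <-]; elim: k => //= k IH; exact: le_trans IH (phi_par _).
Qed.

Lemma lca_ex u v : exists w, is_lca u v w.
Proof.
pose P k := `[< exists j, iter j par v = iter k par u >].
have exP : exists k, P k.
  have [k hk] := hroot u; have [j hj] := hroot v.
  by exists k; apply/asboolP; exists j; rewrite hj hk.
case: (ex_minnP exP) => m /asboolP [j hj] hmin.
exists (iter m par u); split; first by exists m.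
  by exists j.
move=> a [i hi] [i' hi'].
have hm : (m <= i)%N by apply: hmin; apply/asboolP; exists i'; rewrite hi hi'.
by exists (i - m)%N; rewrite -iterD subnK.
Qed.

Lemma lca_ultra x y z wxy wyz wxz :
  is_lca x y wxy -> is_lca y z wyz -> is_lca x z wxz ->
  phi wxz <= phi wxy \/ phi wxz <= phi wyz.
Proof.
move=> [h1 [a ha] h3] [[b hb] h5 h6] [h7 h8 h9].
have [hab|hba] := leqP a b.
  right; apply: phi_anc; apply: h9.
    apply: anc_trans h1; exists (b - a)%N; by rewrite -ha -iterD subnK.
  exact: h5.
left; apply: phi_anc; apply: h9; first exact: h1.
apply: anc_trans h5; exists (a - b)%N; rewrite -hb -iterD subnK //; exact: ltnW.
Qed.

End Tree.

Lemma HST_ultra (R : realType) (X : choiceType) (S : seq X) (dd : X -> X -> R) x y z :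
  is_HST S dd -> x \in S -> y \in S -> z \in S ->
  dd x z <= dd x y \/ dd x z <= dd y z.
Proof.
case=> [-> //| [mu [hmu [N [root [par [phi [leaf]]]]]]]] /=.
move=> [[hpr hroot hphi0 hleaf hphi] [hinj hl1 hl2 hd]] hx hy hz.
have [wxy Hxy] := lca_ex hroot (leaf x) (leaf y).
have [wyz Hyz] := lca_ex hroot (leaf y) (leaf z).
have [wxz Hxz] := lca_ex hroot (leaf x) (leaf z).
rewrite (hd _ _ hx hy _ Hxy) (hd _ _ hy hz _ Hyz) (hd _ _ hx hz _ Hxz).
exact: (lca_ultra hpr hphi0 hmu hphi Hxy Hyz Hxz).
Qed.

Section Mid.
Variable R : realType.

Definition dR (x y : R) : R := `|x - y|.

Lemma dR_metric : is_metric dR.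
Proof.
rewrite /dR; split; first by move=> *; exact: normr_ge0.
split; first by move=> x y; split => [H|->]; [apply/eqP; rewrite -subr_eq0 -normr_eq0; apply/eqP|rewrite subrr normr0].
split; first by move=> x y; exact: distrC.
by move=> x y z; exact: ler_distD.
Qed.

Definition Inv (s : update_seq R) (lo hi : R) (k : nat) :=
  [/\ lo < hi, hi - lo = ((2 : R) ^+ k)^-1,
      (forall x, alive s x = (x == lo) || (x == hi)),
      (forall x, x \in map fst s -> x <= lo \/ hi <= x) &
      [/\ npoints s = k.+2, width s = (if k is 0 then 2 else 3)%N & s != [::]]].

Definition step (c : bool) (g : update_seq R * R * R) : update_seq R * R * R :=
  let s := g.1.1 in let lo := g.1.2 in let hi := g.2 in
  let m := (lo + hi) / 2 in
  if c then (rcons (rcons s (m, true)) (hi, false), lo, m)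
  else (rcons (rcons s (m, true)) (lo, false), m, hi).

Fixpoint gen (cs : seq bool) : update_seq R * R * R :=
  match cs with
  | [::] => ([:: (0, true); (1, true)], 0, 1)
  | c :: cs' => step c (gen cs')
  end.

Lemma Inv0 : Inv [:: (0, true); (1, true)] 0 1 0.
Proof.
split => //; first by rewrite subr0 expr0 invr1.
- by move=> x; rewrite /alive /= !(eq_sym x); case: (1 == x); case: (0 == x).
- by move=> x; rewrite /= !inE => /orP [/eqP ->|/eqP ->]; [left|right].
split => //.
- by rewrite /npoints /= inE eq_sym oner_eq0.
- rewrite -[[:: _; _]]/(rcons (rcons [::] (0 : R, true)) (1, true)).
  rewrite !width_rcons width_nil.
  rewrite (@size_alive_set _ _ [:: 0]) //; last first.
    by move=> x; rewrite alive_rcons inE eq_sym; case: (x == 0).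
  rewrite (@size_alive_set _ _ [:: 0; 1]) //; last first.
    by move=> x; rewrite !alive_rcons !inE !(eq_sym _ x); case: (x == 1); case: (x == 0).
  by rewrite /= inE eq_sym oner_eq0.
Qed.

Ltac kill := repeat (match goal with H : is_true (?a != ?b) |- _ =>
  rewrite ?(negbTE H) ?(eq_sym b a) ?(negbTE H); clear H end).

Lemma Inv_step s lo hi k c : Inv s lo hi k -> 
  let g := step c (s, lo, hi) in Inv g.1.1 g.1.2 g.2 k.+1.
Proof.
move=> [hlt hd hal hout [hnp hw hne]] /=.
set m := (lo + hi) / 2.
have hlm : lo < m by rewrite /m; lra.
have hmh : m < hi by rewrite /m; lra.
have hml : m != lo by rewrite gt_eqF.
have hmhn : m != hi by rewrite lt_eqF.
have hlh : lo != hi by rewrite lt_eqF.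
have hmnot : m \notin map fst s.
  by apply/negP => /hout [H|H]; lra.
have hdm : m - lo = ((2 : R) ^+ k.+1)^-1.
  by rewrite exprS invfM -hd /m; field.
have hdm' : hi - m = ((2 : R) ^+ k.+1)^-1.
  by rewrite exprS invfM -hd /m; field.
have hloin : lo \in map fst s by apply: alive_mem; rewrite hal eqxx.
have hhiin : hi \in map fst s by apply: alive_mem; rewrite hal eqxx orbT.
set p := rcons s (m, true).
have hwp : width p = 3%N.
  rewrite width_rcons (@size_alive_set _ _ [:: lo; m; hi]) /=.
  - by rewrite hw; case: k {hd hnp hw hdm hdm'}.
  - by rewrite !inE !negb_or eq_sym hml hlh hmhn.
  - move=> x; rewrite alive_rcons hal !inE (eq_sym m).
    by case: (x == m); rewrite ?orbT.
have E1 := negbTE hml. have E2 := negbTE hmhn. have E3 := negbTE hlh.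
have E4 : (lo == m) = false by rewrite eq_sym.
have E5 : (hi == m) = false by rewrite eq_sym.
have E6 : (hi == lo) = false by rewrite eq_sym.
have hnpp : npoints p = k.+3 by rewrite /p npoints_rcons (negbTE hmnot) hnp.
have hpin : forall x, x \in map fst p = (x == m) || (x \in map fst s).
  by move=> x; rewrite /p map_rcons mem_rcons inE.
case: c => /=; split => //.
- move=> x; rewrite !alive_rcons hal (eq_sym m) (eq_sym hi).
  case: (eqVneq x hi) => [e|h1]; first by rewrite ?e ?eqxx ?E1 ?E2 ?E3 ?E4 ?E5 ?E6 /= ?orbT ?orbF.
  rewrite ?(negbTE h1) ?(eq_sym hi x) ?(negbTE h1).
  case: (eqVneq x m) => [e|h2]; first by rewrite ?e ?eqxx ?E1 ?E2 ?E3 ?E4 ?E5 ?E6 /= ?orbT ?orbF.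
  rewrite ?(negbTE h2) ?(eq_sym m x) ?(negbTE h2).
  case: (eqVneq x lo) => [e|h3]; first by rewrite ?e ?eqxx ?E1 ?E2 ?E3 ?E4 ?E5 ?E6 /= ?orbT ?orbF.
  by rewrite ?(negbTE h3) ?(eq_sym lo x) ?(negbTE h3) /= ?orbF.
- move=> x; rewrite map_rcons mem_rcons inE hpin => /orP [/eqP ->|/orP [/eqP ->|]].
  + by right; exact: ltW.
  + by right.
  + by case/hout => H; [left|right]; lra.
- split => //.
  + by rewrite npoints_rcons hpin hhiin orbT.
  + rewrite width_rcons hwp (@size_alive_set _ _ [:: lo; m]) //=.
    * by rewrite !inE E4.
    * move=> x; rewrite !alive_rcons hal !inE (eq_sym m) (eq_sym hi).
  case: (eqVneq x hi) => [e|h1]; first by rewrite ?e ?eqxx ?E1 ?E2 ?E3 ?E4 ?E5 ?E6 /= ?orbT ?orbF.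
  rewrite ?(negbTE h1) ?(eq_sym hi x) ?(negbTE h1).
  case: (eqVneq x m) => [e|h2]; first by rewrite ?e ?eqxx ?E1 ?E2 ?E3 ?E4 ?E5 ?E6 /= ?orbT ?orbF.
  rewrite ?(negbTE h2) ?(eq_sym m x) ?(negbTE h2).
  case: (eqVneq x lo) => [e|h3]; first by rewrite ?e ?eqxx ?E1 ?E2 ?E3 ?E4 ?E5 ?E6 /= ?orbT ?orbF.
  by rewrite ?(negbTE h3) ?(eq_sym lo x) ?(negbTE h3) /= ?orbF.
  + by rewrite -size_eq0 size_rcons.
- move=> x; rewrite !alive_rcons hal (eq_sym m) (eq_sym lo).
  case: (eqVneq x hi) => [e|h1]; first by rewrite ?e ?eqxx ?E1 ?E2 ?E3 ?E4 ?E5 ?E6 /= ?orbT ?orbF.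
  rewrite ?(negbTE h1) ?(eq_sym hi x) ?(negbTE h1).
  case: (eqVneq x m) => [e|h2]; first by rewrite ?e ?eqxx ?E1 ?E2 ?E3 ?E4 ?E5 ?E6 /= ?orbT ?orbF.
  rewrite ?(negbTE h2) ?(eq_sym m x) ?(negbTE h2).
  case: (eqVneq x lo) => [e|h3]; first by rewrite ?e ?eqxx ?E1 ?E2 ?E3 ?E4 ?E5 ?E6 /= ?orbT ?orbF.
  by rewrite ?(negbTE h3) ?(eq_sym lo x) ?(negbTE h3) /= ?orbF.
- move=> x; rewrite map_rcons mem_rcons inE hpin => /orP [/eqP ->|/orP [/eqP ->|]].
  + by left; exact: ltW.
  + by left.
  + by case/hout => H; [left|right]; lra.
- split => //.
  + by rewrite npoints_rcons hpin hloin orbT.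
  + rewrite width_rcons hwp (@size_alive_set _ _ [:: m; hi]) //=.
    * by rewrite !inE E2.
    * move=> x; rewrite !alive_rcons hal !inE (eq_sym m) (eq_sym lo).
  case: (eqVneq x hi) => [e|h1]; first by rewrite ?e ?eqxx ?E1 ?E2 ?E3 ?E4 ?E5 ?E6 /= ?orbT ?orbF.
  rewrite ?(negbTE h1) ?(eq_sym hi x) ?(negbTE h1).
  case: (eqVneq x m) => [e|h2]; first by rewrite ?e ?eqxx ?E1 ?E2 ?E3 ?E4 ?E5 ?E6 /= ?orbT ?orbF.
  rewrite ?(negbTE h2) ?(eq_sym m x) ?(negbTE h2).
  case: (eqVneq x lo) => [e|h3]; first by rewrite ?e ?eqxx ?E1 ?E2 ?E3 ?E4 ?E5 ?E6 /= ?orbT ?orbF.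
  by rewrite ?(negbTE h3) ?(eq_sym lo x) ?(negbTE h3) /= ?orbF.
  + by rewrite -size_eq0 size_rcons.
Qed.


Lemma gen_inv cs : Inv (gen cs).1.1 (gen cs).1.2 (gen cs).2 (size cs).
Proof.
elim: cs => [|c cs IH] /=; first exact: Inv0.
by move: IH; case: (gen cs) => [[s lo] hi] /= /(Inv_step c).
Qed.

Definition F (A : online_alg R R) (g : update_seq R * R * R) := A g.1.1 g.1.2 g.2.

Lemma A_step (A : online_alg R R) s lo hi k : strict_embedding dR A -> Inv s lo hi k ->
  [/\ ((2:R) ^+ k.+1)^-1 <= F A (step true (s, lo, hi)),
      ((2:R) ^+ k.+1)^-1 <= F A (step false (s, lo, hi)) &
      A s lo hi <= F A (step true (s, lo, hi)) \/ A s lo hi <= F A (step false (s, lo, hi))].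
Proof.
move=> [hM hS] hI.
have hI1 := Inv_step true hI; have hI2 := Inv_step false hI.
move: hI => [hlt hd hal hout _].
rewrite /F /step /=.
set m := (lo + hi) / 2.
have hlm : lo < m by rewrite /m; lra.
have hmh : m < hi by rewrite /m; lra.
have hdm : m - lo = ((2 : R) ^+ k.+1)^-1 by rewrite exprS invfM -hd /m; field.
have hdm' : hi - m = ((2 : R) ^+ k.+1)^-1 by rewrite exprS invfM -hd /m; field.
set p := rcons s (m, true).
have halp : forall x, alive p x = (m == x) || (x == lo) || (x == hi).
  by move=> x; rewrite /p alive_rcons hal; case: (m == x).
have pl : alive p lo by rewrite halp eqxx orbT.
have pm : alive p m by rewrite halp eqxx.
have ph : alive p hi by rewrite halp eqxx !orbT.
move: hI1 hI2 => [_ _ hal1 _ _] [_ _ hal2 _ _]; rewrite /step /= -/m -/p in hal1 hal2.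
have e1 : A (rcons p (hi, false)) lo m = A p lo m.
  by apply: hS => //; rewrite hal1 eqxx ?orbT.
have e2 : A (rcons p (lo, false)) m hi = A p m hi.
  by apply: hS => //; rewrite hal2 eqxx ?orbT.
have e0 : A p lo hi = A s lo hi.
  by apply: hS => //; rewrite hal eqxx ?orbT.
have [hH _ _] := hM s (m, true).
have [_ hD1 _] := hM p (hi, false).
have [_ hD2 _] := hM p (lo, false).
split.
- have h1 : dR lo m <= A (rcons p (hi, false)) lo m.
    by apply: hD1; rewrite hal1 eqxx ?orbT.
  suff <- : dR lo m = ((2 : R) ^+ k.+1)^-1 by [].
  by rewrite /dR distrC ger0_norm ?hdm // subr_ge0 ltW.
- have h1 : dR m hi <= A (rcons p (lo, false)) m hi.
    by apply: hD2; rewrite hal2 eqxx ?orbT.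
  suff <- : dR m hi = ((2 : R) ^+ k.+1)^-1 by [].
  by rewrite /dR distrC ger0_norm ?hdm' // subr_ge0 ltW.
rewrite e1 e2 -e0.
by apply: (HST_ultra hH); rewrite mem_alive_set.
Qed.


Lemma dom (A : online_alg R R) s u v : monotone_embedding dR A -> s != [::] ->
  alive s u -> alive s v -> dR u v <= A s u v.
Proof.
move=> hM; case/lastP: s => [//|q e] _.
by have [_ hD _] := hM q e; apply: hD.
Qed.

Lemma F_ge (A : online_alg R R) cs : monotone_embedding dR A ->
  ((2:R) ^+ size cs)^-1 <= F A (gen cs).
Proof.
move=> hM; have [hlt hd hal _ [_ _ hne]] := gen_inv cs.
rewrite -hd /F; apply: le_trans (dom hM hne _ _); last by rewrite hal eqxx orbT.
  by rewrite /dR distrC ger0_norm // subr_ge0 ltW.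
by rewrite hal eqxx.
Qed.

Lemma det_exists (A : online_alg R R) K : strict_embedding dR A ->
  exists cs : seq bool, size cs = K /\ 1 <= F A (gen cs).
Proof.
move=> hA; elim: K => [|K [cs [hs h1]]].
  by exists [::]; split => //; have := F_ge [::] hA.1; rewrite expr0 invr1.
have hI := gen_inv cs; rewrite hs in hI.
move: hI; case E: (gen cs) => [[s lo] hi] hI.
have [_ _ [H|H]] := A_step hA hI.
  exists (true :: cs); split; first by rewrite /= hs.
  by rewrite /= E; apply: le_trans H; rewrite /F E in h1.
exists (false :: cs); split; first by rewrite /= hs.
by rewrite /= E; apply: le_trans H; rewrite /F E in h1.
Qed.

Fixpoint allb (K : nat) : seq (seq bool) :=
  if K is K'.+1 then [seq true :: cs | cs <- allb K'] ++ [seq false :: cs | cs <- allb K']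
  else [:: [::]].

Lemma allb_size K : size (allb K) = (2 ^ K)%N.
Proof. by elim: K => //= K IH; rewrite size_cat !size_map IH expnS mul2n addnn. Qed.

Lemma allb_mem K cs : cs \in allb K -> size cs = K.
Proof.
elim: K cs => [|K IH] cs /=; first by rewrite inE => /eqP ->.
by rewrite mem_cat => /orP [] /mapP [cs' /IH <- ->].
Qed.

Lemma sum_ge (A : online_alg R R) K : strict_embedding dR A ->
  1 + K%:R / 2 <= \sum_(cs <- allb K) F A (gen cs).
Proof.
move=> hA; elim: K => [|K IH].
  by rewrite /= big_seq1 mul0r addr0; have := F_ge [::] hA.1; rewrite expr0 invr1.
rewrite /= big_cat !big_map /= -big_split /=.
have -> : 1 + K.+1%:R / 2 = (1 + K%:R / 2) + \sum_(cs <- allb K) ((2:R) ^+ K.+1)^-1.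
  rewrite big_const_seq count_predT iter_addr_0 allb_size -(mulr_natr _ (2 ^ K)) natrX.
  have h2 : (2:R) ^+ K != 0 by rewrite expf_neq0.
  rewrite exprS invfM -mulrA mulVf // mulr1 -natr1; lra.
apply: (le_trans (lerD IH (lexx _))); rewrite -big_split /=.
rewrite big_seq [X in _ <= X]big_seq; apply: ler_sum => cs /allb_mem hs.
have hI := gen_inv cs; rewrite hs in hI.
move: hI; rewrite /F; case E: (gen cs) => [[s lo] hi] hI /=.
have [h1 h2 h3] := A_step hA hI; rewrite /F in h1 h2 h3.
case: h3 => H; lra.
Qed.


Lemma dist_prefix (A : online_alg R R) s e lam :
  distortion_le dR A (rcons s e) lam -> distortion_le dR A s lam.
Proof.
move=> H t /andP [h1 h2] u v hu hv.
have := H t _ u v; rewrite -cats1 takel_cat //; apply => //.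
by rewrite h1 size_cat (leq_trans h2) // leq_addr.
Qed.

Lemma dist_last (A : online_alg R R) s lam u v :
  distortion_le dR A s lam -> s != [::] -> alive s u -> alive s v ->
  A s u v <= lam * dR u v.
Proof.
move=> H hne hu hv; have := H (size s) _ u v; rewrite take_size; apply => //.
by rewrite leqnn andbT lt0n size_eq0.
Qed.

Lemma gstep (s : update_seq R) a b m : a != b ->
  (forall x, alive s x = (x == a) || (x == b)) -> m \notin map fst s -> (width s <= 3)%N ->
  let s' := rcons (rcons s (m, true)) (b, false) in
  [/\ forall x, alive s' x = (x == a) || (x == m), npoints s' = (npoints s).+1,
      width s' = 3%N & forall x, alive (rcons s (m, true)) x = (x == m) || (x == a) || (x == b)].
Proof.
move=> hab hal hm hw /=.
have ha : a \in map fst s by apply: alive_mem; rewrite hal eqxx.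
have hb : b \in map fst s by apply: alive_mem; rewrite hal eqxx orbT.
have hma : m != a by apply: contraNneq hm => ->.
have hmb : m != b by apply: contraNneq hm => ->.
have halp : forall x, alive (rcons s (m, true)) x = (x == m) || (x == a) || (x == b).
  by move=> x; rewrite alive_rcons hal (eq_sym m); case: (x == m).
have hal' : forall x, alive (rcons (rcons s (m, true)) (b, false)) x = (x == a) || (x == m).
  move=> x; rewrite alive_rcons halp (eq_sym b).
  case: (eqVneq x b) => [->|h1] /=; first by rewrite eq_sym (negbTE hab) eq_sym (negbTE hmb).
  by rewrite orbF orbC.
split => //.
- by rewrite npoints_rcons map_rcons mem_rcons inE hb orbT npoints_rcons (negbTE hm).
- have u1 : uniq [:: a; m] by rewrite /= inE eq_sym hma.
  have u2 : uniq [:: m; a; b] by rewrite /= !inE negb_or hma hmb hab.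
  rewrite width_rcons (size_alive_set u1) //.
  rewrite width_rcons (size_alive_set u2) /=; last by move=> x; rewrite halp !inE orbA.
  by rewrite (maxn_idPr hw).
by move=> x; rewrite hal' !inE.
Qed.

Fixpoint Q (j : nat) : update_seq R :=
  if j is j'.+1 then rcons (rcons (Q j') (j'.+2%:R, true)) (j'.+1%:R, false)
  else [:: (0, true); (1, true)].

Lemma Q_inv j :
  [/\ forall x, alive (Q j) x = (x == 0) || (x == j.+1%:R),
      forall x, x \in map fst (Q j) -> x <= j.+1%:R,
      npoints (Q j) = j.+2,
      width (Q j) = (if j is 0 then 2 else 3)%N & Q j != [::]].
Proof.
elim: j => [|j [hal hout hnp hw hne]].
  have [_ _ hal hout [hnp hw hne]] := Inv0; split => //.
  by move=> x; rewrite /= !inE => /orP [/eqP ->|/eqP ->]; rewrite ?ler01 ?lexx.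
have hm : j.+2%:R \notin map fst (Q j).
  apply/negP => /hout; rewrite ler_nat; by rewrite ltnn.
have h0 : (0 : R) != j.+1%:R by rewrite eq_sym pnatr_eq0.
have hw3 : (width (Q j) <= 3)%N by move: hw; case: (j) => [|?] ->.
have [hal' hnp' hw' _] := gstep h0 hal hm hw3.
split => //=.
- move=> x; rewrite map_rcons mem_rcons inE map_rcons mem_rcons inE.
  case/orP => [/eqP ->|/orP [/eqP ->|/hout H]].
  + by rewrite ler_nat.
  + by [].
  + by apply: (le_trans H); rewrite ler_nat.
- by rewrite hnp' hnp.
- by rewrite -size_eq0 size_rcons.
Qed.

Lemma Q_bound (A : online_alg R R) lam j : monotone_embedding dR A ->
  distortion_le dR A (Q j) lam -> A (Q j) 0 j.+1%:R <= lam.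
Proof.
move=> hM; elim: j => [|j IH] H.
  have hd : dR 0 1 = 1 by rewrite /dR sub0r normrN normr1.
  have := dist_last H isT; move/(_ 0 1); rewrite hd mulr1; apply.
    by rewrite /alive /= eqxx; case: ifP.
  by rewrite /alive /= eqxx.
have [hal hout _ hw hne] := Q_inv j.
have h0 : (0 : R) != j.+1%:R by rewrite eq_sym pnatr_eq0.
have hm : j.+2%:R \notin map fst (Q j).
  apply/negP => /hout; rewrite ler_nat; by rewrite ltnn.
have hw3 : (width (Q j) <= 3)%N by move: hw; case: (j) => [|?] ->.
have [hal' _ _ halp] := gstep h0 hal hm hw3.
set q := rcons (Q j) (j.+2%:R, true).
have Hq : distortion_le dR A q lam by apply: dist_prefix H.
have HQ : distortion_le dR A (Q j) lam by apply: dist_prefix Hq.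
have q0 : alive q 0 by rewrite halp eqxx orbT.
have q1 : alive q j.+1%:R by rewrite halp eqxx !orbT.
have q2 : alive q j.+2%:R by rewrite halp eqxx.
have hyz : A q j.+1%:R j.+2%:R <= lam.
  have := dist_last Hq _ q1 q2; rewrite /q -size_eq0 size_rcons => /(_ isT) H1.
  have hd : dR j.+1%:R j.+2%:R = 1.
    by rewrite /dR [j.+2%:R]mulrSr opprD addrA subrr sub0r normrN normr1.
  by rewrite hd mulr1 in H1.
have e1 : A (Q j.+1) 0 j.+2%:R <= A q 0 j.+2%:R.
  have [_ _ hmo] := hM q (j.+1%:R, false); apply: hmo => //; by rewrite /= hal' ?eqxx ?orbT.
have e2 : A q 0 j.+1%:R <= A (Q j) 0 j.+1%:R.
  have [_ _ hmo] := hM (Q j) (j.+2%:R, true); apply: hmo => //; by rewrite hal ?eqxx ?orbT.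
have [hH _ _] := hM (Q j) (j.+2%:R, true).
have hu := HST_ultra (x := 0) (y := j.+1%:R) (z := j.+2%:R) hH.
rewrite !mem_alive_set in hu; have := hu q0 q1 q2 => -[] H2.
  apply: (le_trans e1); apply: (le_trans H2); apply: (le_trans e2); exact: IH.
by apply: (le_trans e1); apply: (le_trans H2).
Qed.


End Mid.

Unset Implicit Arguments.

Lemma part1 (R : realType) :
  (exists c : R, 0 < c /\ exists N : nat, forall n : nat, (N <= n)%N ->
     exists (X : choiceType) (dX : X -> X -> R), is_metric dX /\
       forall A : online_alg R X, strict_embedding dX A ->
         exists s : update_seq X, [/\ width s = 3%N, npoints s = n &
           ~ distortion_le dX A s (c * 2 ^+ n)]).
Proof.
exists (1/8); split; first lra.
exists 3%N => n hn.
have [K ->] : exists K, n = K.+3 by exists (n - 3)%N; lia.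
exists R, (@dR R); split; first exact: dR_metric.
move=> A hA.
have [cs [hs h1]] := det_exists (K.+1) hA.
have := gen_inv R cs; rewrite /F in h1; case E: (gen R cs) h1 => [[s lo] hi] h1.
rewrite hs /= => -[hlt hd hal hout [hnp hw hne]].
exists s; split => // H.
have := dist_last H hne (_ : alive s lo) (_ : alive s hi).
rewrite hal eqxx hal eqxx orbT => /(_ isT isT) H2.
have hd' : dR lo hi = ((2:R) ^+ K.+1)^-1 by rewrite /dR distrC ger0_norm ?subr_ge0 ?ltW.
rewrite hd' in H2.
have he : 1 / 8 * (2:R) ^+ K.+3 * ((2:R) ^+ K.+1)^-1 = 1 / 2.
  have h2 : (2:R) ^+ K.+1 != 0 by rewrite expf_neq0.
  rewrite [2 ^+ K.+3]exprS [2 ^+ K.+2]exprS; field; exact: h2.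
rewrite he in H2; have := le_trans h1 H2; clear; lra.
Qed.

Lemma part3 (R : realType) :
  (exists c : R, 0 < c /\ exists N : nat, forall n : nat, (N <= n)%N ->
     exists (X : choiceType) (dX : X -> X -> R), is_metric dX /\
       forall A : online_alg R X, monotone_embedding dX A ->
         exists s : update_seq X, [/\ width s = 3%N, npoints s = n &
           ~ distortion_le dX A s (c * n%:R)]).
Proof.
exists (1/2); split; first lra.
exists 3%N => n hn.
have [K ->] : exists K, n = K.+3 by exists (n - 3)%N; lia.
exists R, (@dR R); split; first exact: dR_metric.
move=> A hA.
have [hal _ hnp hw hne] := Q_inv R K.+1.
exists (Q R K.+1); split => // H.
have H1 := Q_bound hA H.
have := dom hA hne (_ : alive (Q R K.+1) 0) (_ : alive (Q R K.+1) K.+2%:R).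
rewrite hal eqxx hal eqxx orbT => /(_ isT isT) H2.
have hd : dR 0 (K.+2%:R : R) = K.+2%:R by rewrite /dR sub0r normrN ger0_norm.
rewrite hd in H2.
have := le_trans H2 H1; rewrite -[(K.+3)%:R]natr1 -[(K.+2)%:R]natr1 -[(K.+1)%:R]natr1; have := ler0n R K; clear; lra.
Qed.

Lemma part2 (R : realType) :
  (exists c : R, 0 < c /\ exists N : nat, forall n : nat, (N <= n)%N ->
     exists (X : choiceType) (dX : X -> X -> R), is_metric dX /\
       forall (d : measure_display) (Omega : measurableType d)
              (P : probability Omega R) (A : Omega -> online_alg R X),
         (forall w, strict_embedding dX (A w)) ->
         (forall p u v, measurable_fun setT (fun w => A w p u v)) ->
         exists s : update_seq X, [/\ width s = 3%N, npoints s = n &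
           ~ prob_distortion_le dX P A s (c * n%:R)]).
Proof.
exists (1/4); split; first lra.
exists 3%N => n hn.
have [K ->] : exists K, n = K.+3 by exists (n - 3)%N; lia.
exists R, (@dR R); split; first exact: dR_metric.
move=> d Omega P A hA hmeas.
set lam : R := 1 / 4 * K.+3%:R.
case: (pselect (exists2 cs, cs \in allb K.+1 &
   ~ prob_distortion_le (@dR R) P A (gen R cs).1.1 lam)).
  case=> cs hcs hnd; have hs := allb_mem hcs.
  have := gen_inv R cs; rewrite hs; case: (gen R cs) hnd => [[s lo] hi] /= hnd.
  by case=> _ _ _ _ [hnp hw _]; exists s.
move=> hno; exfalso.
have hall : forall cs, cs \in allb K.+1 -> prob_distortion_le (@dR R) P A (gen R cs).1.1 lam.
  by move=> cs hcs; apply: contrapT => hn'; apply: hno; exists cs.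
have hI : forall cs, cs \in allb K.+1 ->
    (\int[P]_w (F (A w) (gen R cs))%:E <= (lam * ((2:R) ^+ K.+1)^-1)%:E)%E.
  move=> cs hcs; have hs := allb_mem hcs.
  have := gen_inv R cs; rewrite hs /F; case: (gen R cs) (hall cs hcs) => [[s lo] hi] /= Hd.
  case=> hlt hd hal _ [_ _ hne].
  have hdd : dR lo hi = ((2:R) ^+ K.+1)^-1 by rewrite /dR distrC ger0_norm ?subr_ge0 ?ltW.
  have := Hd (size s) _ lo hi; rewrite take_size hal eqxx hal eqxx orbT hdd; apply => //.
  by rewrite leqnn andbT lt0n size_eq0.
have hmf : forall cs, measurable_fun setT (fun w => (F (A w) (gen R cs))%:E).
  by move=> cs; apply/measurable_EFinP; exact: hmeas.
have h0 : forall cs w, setT w -> (0 <= (F (A w) (gen R cs))%:E)%E.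
  move=> cs w _; rewrite lee_fin; apply: le_trans (F_ge cs (hA w).1).
  by rewrite invr_ge0 exprn_ge0.
have hsum := @ge0_integral_sum _ _ _ P setT measurableT _ _ hmf h0 (allb K.+1).
have hlow : ((1 + K.+1%:R / 2)%:E <=
    \int[P]_w (\sum_(cs <- allb K.+1) (F (A w) (gen R cs))%:E))%E.
  have := @ge0_le_integral _ _ _ P setT measurableT (cst (1 + K.+1%:R / 2)%:E)
    (fun w => \sum_(cs <- allb K.+1) (F (A w) (gen R cs))%:E).
  have hP : (P : {measure set Omega -> \bar R}) setT = 1%E := probability_setT P.
  rewrite integral_cst // hP mule1; apply => //.
  - by move=> w _; rewrite lee_fin /=; have := ler0n R K.+1; lra.
  - by apply: emeasurable_sum => cs; exact: hmf.
  - by move=> w _; rewrite sumEFin lee_fin; exact: sum_ge (hA w).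
have hup : (\sum_(cs <- allb K.+1) \int[P]_w (F (A w) (gen R cs))%:E <=
    \sum_(cs <- allb K.+1) (lam * ((2:R) ^+ K.+1)^-1)%:E)%E.
  by rewrite big_seq [X in (_ <= X)%E]big_seq; apply: lee_sum => cs; exact: hI.
rewrite hsum in hlow; have := le_trans hlow hup.
rewrite sumEFin lee_fin big_const_seq count_predT iter_addr_0 allb_size.
rewrite -(mulr_natr _ (2 ^ K.+1)) natrX -mulrA mulVf ?expf_neq0 // mulr1 /lam.
rewrite -[(K.+3)%:R]natr1 -[(K.+2)%:R]natr1 -[(K.+1)%:R]natr1.
have := ler0n R K; clear; lra.
Qed.

Theorem mainTheorem3 (R : realType) :
  (* deterministic strict: Omega(2^n) *)
  (exists c : R, 0 < c /\ exists N : nat, forall n : nat, (N <= n)%N ->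
     exists (X : choiceType) (dX : X -> X -> R), is_metric dX /\
       forall A : online_alg R X, strict_embedding dX A ->
         exists s : update_seq X, [/\ width s = 3%N, npoints s = n &
           ~ distortion_le dX A s (c * 2 ^+ n)])
  /\
  (* probabilistic strict: Omega(n) *)
  (exists c : R, 0 < c /\ exists N : nat, forall n : nat, (N <= n)%N ->
     exists (X : choiceType) (dX : X -> X -> R), is_metric dX /\
       forall (d : measure_display) (Omega : measurableType d)
              (P : probability Omega R) (A : Omega -> online_alg R X),
         (forall w, strict_embedding dX (A w)) ->
         (forall p u v, measurable_fun setT (fun w => A w p u v)) ->
         exists s : update_seq X, [/\ width s = 3%N, npoints s = n &
           ~ prob_distortion_le dX P A s (c * n%:R)])
  /\
  (* deterministic monotone: Omega(n) *)
  (exists c : R, 0 < c /\ exists N : nat, forall n : nat, (N <= n)%N ->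
     exists (X : choiceType) (dX : X -> X -> R), is_metric dX /\
       forall A : online_alg R X, monotone_embedding dX A ->
         exists s : update_seq X, [/\ width s = 3%N, npoints s = n &
           ~ distortion_le dX A s (c * n%:R)]).
Proof.
split; first exact: part1.
split; first exact: part2.
exact: part3.
Qed.
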